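(* Let $q\in\mathbb{C}$ with $|q|<1$ and let $k,l\ge0$ be integers. Then for $x\in[0,1]$, $$B_{k,l}(x,q)=\frac{k!}{[k]_q!}x^k\sum_{m=0}^l\frac{[m]_q!}{m!}S(m,k)\,\beta_{l-m}^{(k)}((1-x)_q,q)\binom{l}{m}_q.$$
   Context: For a number $x$, $[x]_q=\frac{1-q^x}{1-q}$; $[n]_q!=[n]_q\cdots[1]_q$, $[0]_q!=1$; $\binom{n}{k}_q=\frac{[n]_q!}{[k]_q![n-k]_q!}$ for $0\le k\le n$ and $0$ for $k>n$. $(1-b)_q^n=\prod_{i=1}^n(1-bq^{i-1})$. $B_{k,n}(x,q)=\binom{n}{k}_q x^k(1-x)_q^{n-k}$ if $n\ge k$ and $0$ if $n<k$. $S(m,k)$ are the Stirling numbers of the second kind: $\frac{(e^t-1)^k}{k!}=\sum_{m\ge0}S(m,k)\frac{t^m}{m!}$. $B_m^{(k)}$ are the Bernoulli numbers of order $k$: $\left(\frac{t}{e^t-1}\right)^k=\sum_{m\ge0}B_m^{(k)}\frac{t^m}{m!}$. The $q$-Bernoulli polynomials of order $k$ are defined by $\left(\frac{z}{e^z-1}\right)^k e_q(zy)=\sum_{n\ge0}\beta_n^{(k)}(y,q)\frac{z^n}{[n]_q!}$, where $e_q(zy)=\sum_{j\ge0}\frac{y^jz^j}{[j]_q!}$, so $\beta_n^{(k)}(y,q)=\sum_{m=0}^n\binom{n}{m}_q\frac{[m]_q!}{m!}B_m^{(k)}y^{n-m}$. The symbol $\beta_n^{(k)}((1-x)_q,q)$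 is understood umbrally, i.e. each power $y^{j}$ is replaced by $(1-x)_q^{j}$: $\beta_n^{(k)}((1-x)_q,q)=\sum_{m=0}^n\binom{n}{m}_q\frac{[m]_q!}{m!}B_m^{(k)}(1-x)_q^{n-m}$ (equivalently, $\left(\frac{t}{e^t-1}\right)^k\sum_{j\ge0}\frac{(1-x)_q^jt^j}{[j]_q!}=\sum_{n\ge0}\beta_n^{(k)}((1-x)_q,q)\frac{t^n}{[n]_q!}$ as formal power series). *)

(* Defs.v *)
From mathcomp Require Import all_boot all_order all_algebra.
From mathcomp Require Import reals.
From mathcomp Require Export complex.
Set Implicit Arguments.
Unset Strict Implicit.
Unset Printing Implicit Defensive.
Import Order.TTheory GRing.Theory Num.Theory.
Local Open Scope ring_scope.

Section QDefs.
Variable F : fieldType.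

Definition qint (q : F) (n : nat) : F := (1 - q ^+ n) / (1 - q).

Definition qfact (q : F) (n : nat) : F := \prod_(i < n) qint q i.+1.

Definition qbinom (q : F) (n k : nat) : F :=
  if (k <= n)%N then qfact q n / (qfact q k * qfact q (n - k)) else 0.

(* (1 - b)_q^n = prod_{i=1}^n (1 - b q^(i-1)) *)
Definition qpoch (b q : F) (n : nat) : F := \prod_(i < n) (1 - b * q ^+ i).

Definition qBernstein (k n : nat) (x q : F) : F :=
  if (k <= n)%N then qbinom q n k * x ^+ k * qpoch x q (n - k) else 0.

(* Stirling numbers of the second kind: S(m,k) is the coefficient of t^m/m!
   in (e^t - 1)^k / k!, i.e. (1/k!) sum_{j=0}^k (-1)^(k-j) C(k,j) j^m. *)
Definition stirling2 (m k : nat) : F :=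
  (k`!%:R)^-1 * \sum_(j < k.+1) (-1) ^+ (k - j) * ('C(k, j))%:R * (j%:R) ^+ m.

(* Coefficients a_n of the power series t/(e^t - 1) = sum_n a_n t^n, defined as
   the multiplicative inverse of (e^t - 1)/t = sum_j t^j/(j+1)!:
   a_0 = 1, a_n = - sum_{j<n} a_j / (n-j+1)!. *)
Fixpoint bern_seq (n : nat) : seq F :=
  match n with
  | 0 => [::]
  | n'.+1 =>
      let s := bern_seq n' in
      rcons s (if n' == 0%N then 1
               else - \sum_(j < n') s`_j / ((n' - j).+1`!)%:R)
  end.

Definition bern_coef (n : nat) : F := (bern_seq n.+1)`_n.

(* Bernoulli numbers of order k: (t/(e^t-1))^k = sum_m B_m^(k) t^m/m!.
   The coefficient of t^m in the k-th power only depends on the first m+1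
   coefficients, so we compute it from the truncation to degree m. *)
Definition bernoulli_order (k m : nat) : F :=
  (m`!)%:R * ((\poly_(i < m.+1) bern_coef i) ^+ k)`_m.

(* beta_n^(k)((1-x)_q, q), umbral reading:
   sum_{m=0}^n binom(n,m)_q [m]_q!/m! B_m^(k) (1-x)_q^(n-m) *)
Definition qbeta_umbral (k n : nat) (x q : F) : F :=
  \sum_(m < n.+1) qbinom q n m * (qfact q m / (m`!)%:R) *
                  bernoulli_order k m * qpoch x q (n - m).

End QDefs.

(* Main.v *)
Require Import Defs.
From mathcomp Require Import all_boot all_order all_algebra.
From mathcomp Require Import reals complex.
From mathcomp Require Import ring.
Import Order.TTheory GRing.Theory Num.Theory.
Local Open Scope ring_scope.

Section Gen.
Variable F : numFieldType.
Implicit Types p r : {poly F}.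

Lemma fact_neq0 n : (n`!)%:R != 0 :> F.
Proof. by rewrite pnatr_eq0 -lt0n fact_gt0. Qed.

Lemma takeM N p p' r r' : take_poly N p = take_poly N p' ->
  take_poly N r = take_poly N r' -> take_poly N (p * r) = take_poly N (p' * r').
Proof.
move=> hp hr; apply/polyP=> i; rewrite !coef_take_poly; case: ifP => // hi.
rewrite !coefM; apply: eq_bigr => j _.
have hj : (j < N)%N by exact: leq_trans (ltn_ord j) hi.
have hij : (i - j < N)%N by exact: leq_ltn_trans (leq_subr _ _) hi.
have e1 := congr1 (fun s : {poly F} => s`_j) hp.
have e2 := congr1 (fun s : {poly F} => s`_(i - j)) hr.
rewrite /= !coef_take_poly hj hij in e1 e2.
by rewrite e1 e2.
Qed.

Lemma takeX N p p' k : take_poly N p = take_poly N p' ->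
  take_poly N (p ^+ k) = take_poly N (p' ^+ k).
Proof.
move=> h; elim: k => [|k IH]; first by rewrite !expr0.
by rewrite !exprS; apply: takeM.
Qed.

Lemma takeT N p : take_poly N (take_poly N p) = take_poly N p.
Proof. by rewrite take_poly_id // size_take_poly. Qed.

Definition ex N (a : F) : {poly F} := \poly_(i < N) (a ^+ i / (i`!)%:R).

Lemma ex_mul N a b : take_poly N (ex N a * ex N b) = ex N (a + b).
Proof.
apply/polyP=> i; rewrite coef_take_poly coef_poly; case: ifP => // hi.
rewrite coefMr exprDn mulr_suml; apply: eq_bigr => j _.
have hj : (j < N)%N by exact: leq_trans (ltn_ord j) hi.
have hij : (i - j < N)%N by exact: leq_ltn_trans (leq_subr _ _) hi.
rewrite !coef_poly hj hij.
have hji : (j <= i)%N by rewrite -ltnS.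
rewrite -[_ *+ 'C(i, j)]mulr_natr -(bin_fact hji) !natrM.
have h1 := fact_neq0 j; have h2 := fact_neq0 (i - j).
have h3 : ('C(i, j))%:R != 0 :> F by rewrite pnatr_eq0 -lt0n bin_gt0.
by field; rewrite h1 h2 h3.
Qed.

Lemma ex_id N a : take_poly N (ex N a) = ex N a.
Proof. by rewrite take_poly_id // size_poly. Qed.

Lemma ex_pow N j : (0 < N)%N -> take_poly N (ex N 1 ^+ j) = ex N j%:R.
Proof.
move=> hN; elim: j => [|j IH].
  rewrite expr0; apply/polyP=> i; rewrite coef_take_poly coef_poly coefC.
  case: ifP => hi; case: i hi => [|i] hi //=.
    by rewrite expr0 fact0 divr1.
  by rewrite expr0n /= mul0r.
rewrite exprSr -natr1 -ex_mul; apply: takeM => //.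
by rewrite IH ex_id.
Qed.

Definition E N : {poly F} := \poly_(i < N) ((i.+1)`!%:R)^-1.

Lemma XE N : (0 < N)%N -> take_poly N ('X * E N) = ex N 1 - 1.
Proof.
move=> hN; apply/polyP=> i; rewrite coef_take_poly coefXM coefB !coef_poly coefC.
case: ifP => hi; case: i hi => [|i] hi /=.
- by rewrite expr1n fact0 divr1 subrr.
- by rewrite (ltn_trans (ltnSn i) hi) expr1n mul1r subr0.
- by rewrite hN in hi.
- by rewrite subr0.
Qed.

Lemma bern_seq_size n : size (bern_seq F n) = n.
Proof. by elim: n => //= n IH; rewrite size_rcons IH. Qed.

Lemma bern_nth n j : (j < n)%N -> (bern_seq F n)`_j = bern_coef F j.
Proof.
elim: n => // n IH hj.
case hjn: (j < n)%N.
  by rewrite /= nth_rcons bern_seq_size hjn IH.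
have -> : j = n by apply/eqP; rewrite eqn_leq -ltnS hj leqNgt hjn.
by [].
Qed.

Lemma bern_rec n : (0 < n)%N ->
  bern_coef F n = - \sum_(j < n) bern_coef F j / ((n - j).+1`!)%:R.
Proof.
move=> hn.
rewrite (eq_bigr (fun j : 'I_n => (bern_seq F n)`_j / ((n - j).+1`!)%:R));
  last by move=> j _; rewrite bern_nth.
rewrite {1}/bern_coef /= nth_rcons bern_seq_size ltnn eqxx.
by case: n hn.
Qed.

Lemma inv1f : (((0.+1)`!)%:R)^-1 = 1 :> F.
Proof. by rewrite (_ : (0.+1)`! = 1)%N // invr1. Qed.

Definition Bp N : {poly F} := \poly_(i < N) bern_coef F i.

Lemma BE N : (0 < N)%N -> take_poly N (Bp N * E N) = 1.
Proof.
move=> hN; apply/polyP=> n; rewrite coef_take_poly coefC; case: ifP => hn.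
  rewrite coefM.
  case: n hn => [|n] hn.
    by rewrite big_ord1 !coef_poly hN /= subnn inv1f mulr1 /bern_coef.
  rewrite big_ord_recr /= subnn !coef_poly hn hN inv1f mulr1 (@bern_rec n.+1 (ltn0Sn n)).
  rewrite [X in X + _](_ : _ = \sum_(j < n.+1) bern_coef F j / ((n.+1 - j).+1`!)%:R).
    by rewrite addrN.
  apply: eq_bigr => j _ /=.
  have hj : (j < N)%N by exact: ltn_trans (ltn_ord j) hn.
  have hij : (n.+1 - j < N)%N.
    by apply: leq_ltn_trans hn; rewrite leq_subLR leq_addl.
  by rewrite !coef_poly hj hij.
by case: n hn => [|n] hn //; rewrite hN in hn.
Qed.

Lemma stir N k m : (m < N)%N -> (0 < N)%N ->
  ((ex N 1 - 1) ^+ k)`_m = k`!%:R * (stirling2 F m k / m`!%:R).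
Proof.
move=> hm hN; rewrite addrC exprDn coef_sum /stirling2.
rewrite mulrA mulrA mulfV ?fact_neq0 // mul1r mulr_suml.
apply: eq_bigr => i _.
have hc n : ((-1) ^+ n : {poly F}) = ((-1) ^+ n)%:P.
  by rewrite rmorphXn /= polyCN.
rewrite coefMn hc coefCM.
have := congr1 (fun p : {poly F} => p`_m) (ex_pow N i hN).
rewrite /= coef_take_poly coef_poly hm => ->.
rewrite -mulr_natr; ring.
Qed.

Definition Sp N k : {poly F} := \poly_(i < N) (stirling2 F i k / (i`!)%:R).

Lemma SB N k i : (0 < N)%N -> (i < N)%N ->
  (Sp N k * Bp N ^+ k)`_i = (i == k)%:R / (k`!)%:R.
Proof.
move=> hN hi.
have h1 : take_poly N ((k`!)%:R *: Sp N k) = take_poly N ((ex N 1 - 1) ^+ k).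
  apply/polyP=> j; rewrite !coef_take_poly; case: ifP => // hj.
  by rewrite coefZ coef_poly hj stir.
have h2 : take_poly N ((ex N 1 - 1) ^+ k) = take_poly N (('X * E N) ^+ k).
  by apply: takeX; rewrite -(XE N hN) takeT.
have h3 : take_poly N (('X * E N) ^+ k * Bp N ^+ k) = take_poly N ('X ^+ k).
  rewrite exprMn -mulrA -[in RHS](mulr1 ('X ^+ k)); apply: takeM => //.
  rewrite -exprMn mulrC -(expr1n _ k); apply: takeX.
  by rewrite BE // take_poly_id // size_poly1.
have h4 : take_poly N ((k`!)%:R *: Sp N k * Bp N ^+ k) = take_poly N ('X ^+ k).
  by rewrite -h3; apply: takeM => //; rewrite h1 h2.
have := congr1 (fun p : {poly F} => p`_i) h4.
rewrite /= !coef_take_poly hi -scalerAl coefZ coefXn => <-.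
by rewrite [RHS]mulrC mulKf ?fact_neq0.
Qed.

Lemma BO N k m : (m < N)%N ->
  bernoulli_order F k m = m`!%:R * (Bp N ^+ k)`_m.
Proof.
move=> hm; rewrite /bernoulli_order; congr (_ * _).
have h : take_poly m.+1 (\poly_(i < m.+1) bern_coef F i) = take_poly m.+1 (Bp N).
  apply/polyP=> j; rewrite !coef_take_poly; case: ifP => // hj.
  by rewrite !coef_poly hj (leq_trans hj hm).
have := congr1 (fun p : {poly F} => p`_m) (@takeX _ _ _ k h).
by rewrite /= !coef_take_poly ltnSn.
Qed.

Lemma qfact_neq0 (q : F) n : `|q| < 1 -> qfact q n != 0.
Proof.
move=> hq; rewrite /qfact; apply/prodf_neq0 => i _.
rewrite /qint mulf_neq0 // ?invr_eq0 subr_eq0 eq_sym.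
  apply/negP => /eqP h; have := congr1 (fun z => `|z|) h.
  rewrite /= normrX normr1 => h'.
  by move: (exprn_ilt1 i.+1 (normr_ge0 q) hq); rewrite h' ltxx.
apply/negP => /eqP h; move: hq; by rewrite h normr1 ltxx.
Qed.

End Gen.

Lemma fin_eq (F : fieldType) (Ql Qk Qlk f yk p : F) :
  Qk != 0 -> Qlk != 0 -> f != 0 ->
  Ql / (Qk * Qlk) * yk * p = f / Qk * yk * (Ql * (1 / f * (p / Qlk))).
Proof. by move=> h1 h2 h3; field; rewrite h1 h2 h3. Qed.

Local Open Scope complex_scope.

Theorem theorem10 (R : realType) (q : R[i]) (k l : nat) (x : R) :
  `|q| < 1 -> 0 <= x <= 1 ->
  qBernstein k l x%:C q =
    (k`!)%:R / qfact q k * (x%:C) ^+ k *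
    \sum_(m < l.+1) (qfact q m / (m`!)%:R) * stirling2 _ m k *
                    qbeta_umbral k (l - m) x%:C q * qbinom q l m.
Proof.
move=> hq _.
set y := x%:C.
have QN n : qfact q n != 0 := qfact_neq0 _ q n hq.
have FN n : (n`!)%:R != 0 :> R[i] := fact_neq0 _ n.
set Pp : {poly R[i]} := \poly_(i < l.+1) (qpoch y q i / qfact q i).
set Bk := Bp R[i] l.+1 ^+ k.
have hbeta n : (n < l.+1)%N ->
    qbeta_umbral k n y q = qfact q n * (Bk * Pp)`_n.
  move=> hn; rewrite /qbeta_umbral coefM mulr_sumr; apply: eq_bigr => j _.
  have hjn : (j <= n)%N by rewrite -ltnS.
  have hjl : (j < l.+1)%N by exact: leq_ltn_trans hjn hn.
  have hnj : (n - j < l.+1)%N by exact: leq_ltn_trans (leq_subr _ _) hn.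
  rewrite /qbinom hjn (BO _ l.+1) // coef_poly hnj.
  have h1 := QN j; have h2 := QN (n - j)%N; have h3 := FN j.
  by field; rewrite ?h1 ?h2 ?h3.
rewrite (_ : \sum_(m < l.+1) _ = qfact q l * (Sp R[i] l.+1 k * (Bk * Pp))`_l); last first.
  rewrite coefM mulr_sumr; apply: eq_bigr => m _.
  have hml : (m <= l)%N by rewrite -ltnS.
  rewrite hbeta; last by rewrite ltnS leq_subr.
  rewrite /qbinom hml coef_poly ltn_ord.
  have h1 := QN m; have h2 := QN (l - m)%N; have h3 := FN m.
  by field; rewrite ?h1 ?h2 ?h3.
rewrite mulrA coefM.
rewrite (eq_bigr (fun i : 'I_l.+1 => (i == k :> nat)%:R / (k`!)%:R * Pp`_(l - i)));
  last by move=> i _; rewrite SB.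
case: (leqP k l) => hkl.
  rewrite (bigD1 (Ordinal (hkl : (k < l.+1)%N))) //= big1 ?addr0; last first.
    move=> i hi; have : (i : nat) != k.
      by apply: contra hi => /eqP e; apply/eqP/val_inj.
    by move/negbTE => ->; rewrite mul0r mul0r.
  have e1 : ((k == k)%:R : R[i]) = 1 by rewrite eqxx.
  rewrite e1 coef_poly ltnS leq_subr /qBernstein hkl /qbinom hkl.
  by apply: fin_eq; [exact: QN | exact: QN | exact: FN].
rewrite big1 ?mulr0 /qBernstein; last first.
  move=> i _; have : (i : nat) != k.
    by apply/eqP => e; move: (ltn_ord i); rewrite e ltnS leqNgt hkl.
  by move/negbTE => ->; rewrite mul0r mul0r.
by rewrite leqNgt hkl.
Qed.
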